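(* Let $\psi=13/10$, $\chi=1/2$, and $f(r)=\frac{\psi-r^{\chi}}{1+r}$ for $r\in(0,1]$. Parameterize $r$ by $t$ via $e^{t}=\frac{r}{1+r}$ (so $t\in(-\infty,\ln(1/2)]$). Then $f$, viewed as a function of $t$, i.e. $t\mapsto f\big(\frac{e^t}{1-e^t}\big)$, is concave on $(-\infty,\ln(1/2)]$. *)

(* Defs.v *)
From Stdlib Require Import Reals.
Open Scope R_scope.

Definition psi : R := 13/10.
Definition chi : R := 1/2.

Definition f (r : R) : R := (psi - Rpower r chi) / (1 + r).

Definition r_of_t (t : R) : R := exp t / (1 - exp t).

Definition g (t : R) : R := f (r_of_t t).

Definition concave_on (D : R -> Prop) (h : R -> R) : Prop :=
  forall x y l, D x -> D y -> 0 <= l <= 1 ->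
    l * h x + (1 - l) * h y <= h (l * x + (1 - l) * y).

(* Main.v *)
From Stdlib Require Import Reals Lra Psatz.
From Coquelicot Require Import Coquelicot.
Require Import Defs.
From Stdlib Require Import Reals.
Open Scope R_scope.

Definition Gf (t : R) : R := psi*(1 - exp t) - sqrt (exp t - exp t * exp t).
Definition G1 (t : R) : R :=
  -psi*exp t - (exp t - 2*(exp t*exp t))/(2*sqrt(exp t - exp t*exp t)).
Definition G2 (t : R) : R :=
  let E := exp t in let S := sqrt (E - E*E) in
  -psi*E - ((E-4*(E*E))*2*(S*S) - (E-2*(E*E))^2)/(4*(S*S*S)).

Lemma s_pos t : t < 0 -> 0 < exp t - exp t * exp t.
Proof.
  intro H. assert (exp t < 1) by (rewrite <- exp_0; apply exp_increasing; lra).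
  pose proof (exp_pos t). nra.
Qed.

Lemma dG t : t < 0 -> is_derive Gf t (G1 t).
Proof.
  intro H. pose proof (s_pos t H). unfold Gf, G1.
  auto_derive. { lra. }
  unfold Rminus. pose proof (sqrt_lt_R0 _ H0). unfold Rminus in H1.
  set (S := sqrt _) in *. field. lra.
Qed.

Lemma dG1 t : t < 0 -> is_derive G1 t (G2 t).
Proof.
  intro H. pose proof (s_pos t H). unfold G1, G2.
  auto_derive. { pose proof (sqrt_lt_R0 _ H0). unfold Rminus in *. repeat split; lra. }
  unfold Rminus. pose proof (sqrt_lt_R0 _ H0). unfold Rminus in H1.
  set (S := sqrt _) in *. field. lra.
Qed.

Lemma poly_ineq E : 0 < E <= 1/2 -> 4*E*E - 6*E + 1 < 0 ->
  (4*E*E-6*E+1)^2 <= 27 * (E * (1-E)^3).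
Proof.
  intros [H1 H2] H3.
  assert (E >= 1/6) by nra.
  assert (4*E*E-6*E+1 >= -1) by (assert (0 <= (1-2*E)*(1-E)) by (apply Rmult_le_pos; lra); nra).
  assert ((4*E*E-6*E+1)^2 <= 1) by (simpl; nra).
  assert (E*(1-E)^3 >= 1/27).
  { destruct (Rle_lt_dec E (1/3)).
    - assert ((1-E)^3 >= 8/27) by (assert (1-E >= 2/3) by lra; nra). nra.
    - assert ((1-E)^3 >= 1/8) by (assert (1-E >= 1/2) by lra; nra). nra. }
  lra.
Qed.

Lemma key E S : 0 < E <= 1/2 -> 0 < S -> S*S = E - E*E ->
  0 <= 4*psi*(S*S*S) + E*(4*E*E - 6*E + 1).
Proof.
  intros HE HS HSS. unfold psi.
  destruct (Rle_lt_dec 0 (4*E*E - 6*E + 1)) as [Hq|Hq].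
  - assert (0 < S*S*S) by (apply Rmult_lt_0_compat; nra). nra.
  - pose proof (poly_ineq E HE Hq).
    set (A := 4*(13/10)*(S*S*S)). set (B := - (E*(4*E*E - 6*E + 1))).
    assert (0 <= A) by (unfold A; assert (0 < S*S*S) by (apply Rmult_lt_0_compat; nra); nra).
    assert (0 <= B) by (unfold B; nra).
    assert (A*A = 16*(169/100)*((E-E*E)*(E-E*E)*(E-E*E))) by (unfold A; rewrite <- HSS; field).
    assert (B*B <= A*A).
    { rewrite H2. unfold B.
      replace ((E - E*E)*(E-E*E)*(E-E*E)) with (E*E*(E*(1-E)^3)) by ring.
      replace (- (E * (4 * E * E - 6 * E + 1)) * - (E * (4 * E * E - 6 * E + 1)))
        with (E*E*(4*E*E-6*E+1)^2) by ring.
      assert (0 < E*E) by nra. nra. }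
    assert (B <= A) by nra. unfold A, B in *. lra.
Qed.

Lemma G2_neg t : t <= ln (1/2) -> G2 t <= 0.
Proof.
  intro Ht.
  assert (HE : exp t <= 1/2).
  { destruct (Rle_lt_or_eq_dec _ _ Ht) as [h|h].
    - left. rewrite <- (exp_ln (1/2)) by lra. apply exp_increasing; auto.
    - rewrite h, exp_ln; lra. }
  assert (Hln : ln (1/2) < 0) by (rewrite <- ln_1; apply ln_increasing; lra).
  pose proof (s_pos t ltac:(lra)) as Hs.
  pose proof (exp_pos t).
  unfold G2. set (E := exp t) in *. set (S := sqrt (E - E*E)).
  assert (HS : 0 < S) by (apply sqrt_lt_R0; auto).
  assert (HSS : S*S = E - E*E) by (apply sqrt_sqrt; lra).
  pose proof (key E S ltac:(lra) HS HSS).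
  assert (H3 : 0 < S*S*S) by (apply Rmult_lt_0_compat; nra).
  replace (-psi*E - ((E-4*(E*E))*2*(S*S) - (E-2*(E*E))^2)/(4*(S*S*S)))
    with (- (E*(4*psi*(S*S*S) + E*(4*E*E - 6*E + 1))) / (4*(S*S*S))).
  2:{ rewrite HSS. field. lra. }
  assert (0 <= E*(4*psi*(S*S*S) + E*(4*E*E - 6*E + 1))) by nra.
  assert (0 < /(4*(S*S*S))) by (apply Rinv_0_lt_compat; lra).
  unfold Rdiv. nra.
Qed.

Lemma mvt F dF a b : (forall t, t < 0 -> is_derive F t (dF t)) ->
  a <= b <= ln (1/2) -> exists c, a <= c <= b /\ F b - F a = dF c * (b - a).
Proof.
  intros HD Hab.
  assert (Hln : ln (1/2) < 0) by (rewrite <- ln_1; apply ln_increasing; lra).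
  destruct (MVT_gen F a b dF) as [c [Hc Heq]].
  - intros x Hx. rewrite Rmin_left in Hx by lra. rewrite Rmax_right in Hx by lra.
    apply HD; lra.
  - intros x Hx. rewrite Rmin_left in Hx by lra. rewrite Rmax_right in Hx by lra.
    apply derivable_continuous_pt. exists (dF x).
    apply is_derive_Reals. apply HD; lra.
  - rewrite Rmin_left in Hc by lra. rewrite Rmax_right in Hc by lra.
    exists c; auto.
Qed.

Lemma G1_decr c1 c2 : c1 <= c2 <= ln (1/2) -> G1 c2 <= G1 c1.
Proof.
  intro H. destruct (mvt G1 G2 c1 c2 dG1 H) as [c [Hc Heq]].
  pose proof (G2_neg c ltac:(lra)). nra.
Qed.

Lemma conc_le x y l : x <= y <= ln (1/2) -> 0 <= l <= 1 ->
  l * Gf x + (1 - l) * Gf y <= Gf (l * x + (1 - l) * y).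
Proof.
  intros Hxy Hl. set (z := l * x + (1 - l) * y).
  assert (x <= z <= y) by (unfold z; nra).
  destruct (mvt Gf G1 x z dG ltac:(lra)) as [c1 [Hc1 E1]].
  destruct (mvt Gf G1 z y dG ltac:(lra)) as [c2 [Hc2 E2]].
  pose proof (G1_decr c1 c2 ltac:(lra)).
  assert (z - x = (1-l)*(y-x)) by (unfold z; ring).
  assert (y - z = l*(y-x)) by (unfold z; ring).
  assert (0 <= l*(1-l)*(y-x)) by (apply Rmult_le_pos; nra).
  rewrite H1 in E1. rewrite H2 in E2. nra.
Qed.

Lemma g_eq t : t < 0 -> g t = Gf t.
Proof.
  intro H. pose proof (s_pos t H). pose proof (exp_pos t).
  assert (exp t < 1) by (rewrite <- exp_0; apply exp_increasing; lra).
  unfold Defs.g, Defs.f, Gf, r_of_t, chi.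
  set (e := exp t) in *.
  replace (1/2) with (/2) by field.
  assert (Hr : 0 < e / (1 - e)) by (apply Rdiv_lt_0_compat; lra).
  rewrite Rpower_sqrt by exact Hr.
  replace (e - e*e) with ((e/(1-e)) * ((1-e)*(1-e))) by (field; lra).
  rewrite sqrt_mult by nra. rewrite sqrt_square by lra.
  field. lra.
Qed.

Theorem lemma25 : concave_on (fun t => t <= ln (1/2)) g.
Proof.
  intros x y l Hx Hy Hl.
  assert (Hln : ln (1/2) < 0) by (rewrite <- ln_1; apply ln_increasing; lra).
  assert (Hz : l * x + (1 - l) * y <= ln (1/2)) by nra.
  rewrite !g_eq by lra.
  destruct (Rle_lt_dec x y).
  - apply conc_le; lra.
  - replace (l * x + (1 - l) * y) with ((1-l) * y + (1 - (1-l)) * x) by ring.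
    replace (l * Gf x + (1 - l) * Gf y) with ((1-l) * Gf y + (1 - (1-l)) * Gf x) by ring.
    apply conc_le; lra.
Qed.
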